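(* Let $d\ge4$, let $F$ be a field with $\operatorname{char}F=0$ or $\operatorname{char}F>d$, and let $K/F$ be a degree $d$ extension whose Galois closure $L$ has $\mathrm{Gal}(L/F)\cong S_d$. Let $1,\alpha_1,\dots,\alpha_{d-1}$ be an $F$-basis of $K$ with $\mathrm{Tr}_{K/F}(\alpha_i)=0$ for $i\ge1$, and let $1,\alpha_1^*,\dots,\alpha_{d-1}^*$ be the dual basis with respect to the trace form $(x,y)\mapsto\mathrm{Tr}_{K/F}(xy)$. Let $Q^1,\dots,Q^{\beta}\in F[x_1,\dots,x_{d-1}]$ be the quadratic forms defined below. Then for every $\ell$, \[Q^\ell(\alpha_1^*,\dots,\alpha_{d-1}^* )=0\quad\text{in }K,\] and consequently $Q^\ell$ vanishes at each of the $d$ points $[\sigma_m(\alpha_1^* ):\dots:\sigma_m(\alpha_{d-1}^* )]\in\mathbf{P}^{d-2}(L)$, $m=1,\dots,d$.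
   Context: Let $\sigma_1=\mathrm{id},\sigma_2,\dots,\sigma_d$ be the $F$-embeddings $K\hookrightarrow L$, write $\alpha^{(m)}=\sigma_m(\alpha)$ for $\alpha\in K$, and identify $\mathrm{Gal}(L/F)$ with $S_d=\mathrm{Sym}\{1,\dots,d\}$ via its action on the indices of the $\alpha^{(m)}$ for a primitive element $\alpha$ of $K$. Let $V_1=\mathrm{Span}_F\{\alpha_1,\dots,\alpha_{d-1}\}$ (the trace-zero elements of $K$). View $L$ as a representation of $S_d$ over $F$; let $W_{(d-2,2)}\subseteq L$ be its isotypic component of the Specht module $V_{(d-2,2)}$, and $V_2=W_{(d-2,2)}\cap L^{S_2\times S_{d-2}}$, where $S_2\times S_{d-2}$ is the stabilizer of $\{1,2\}$; $V_2$ has $F$-dimension $\beta=d(d-3)/2$. Define the quadratic map $q\colon V_1\to L$ by \[q(\alpha)=\sum_{\tau\in S_{d-2}}\big(\alpha^{(1)}-\alpha^{(\tau(3))}\big)\big(\alpha^{(2)}-\alpha^{(\tau(4))}\big),\] with $S_{d-2}$ the permutations of $\{3,\dots,d\}$; its image lies in $V_2$. Fix an $F$-basis $\omega_1,\dots,\omega_\beta$ of $V_2$ and define the quadratic forms $Q^\ell$ by $q\big(\sum_j a_j\alpha_j\big)=\sum_{\ell=1}^{\beta}Q^\ell(a_1,\dots,a_{d-1})\,\omega_\ell$ for all $a_j\in F$. *)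

(* Defs.v *)
From HB Require Import structures.
From mathcomp Require Import all_boot all_order all_algebra all_fingroup all_field.
From mathcomp Require Import mpoly.
Set Implicit Arguments. Unset Strict Implicit. Unset Printing Implicit Defensive.
Import GRing.Theory.
Local Open Scope ring_scope.

Section Defs.
Variables (F : fieldType) (L : splittingFieldType F) (d : nat).
Variable (K : {subfield L}).
Variable (s : 'I_d -> gal_of (fullv : {vspace L})).

Definition idx_perm (g : gal_of (fullv : {vspace L})) (m : 'I_d) : 'I_d :=
  odflt m [pick m' | all (fun x => g (s m x) == s m' x) (vbasis K)].

Definition GalLF : {set gal_of (fullv : {vspace L})} := ('Gal(fullv / 1%VS))%g.

Definition trKF (x : L) : L := \sum_(m < d) s m x.

Definition H12 : {set gal_of (fullv : {vspace L})} :=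
  [set g in GalLF | [forall i : 'I_d, (val i < 2)%N == (val (idx_perm g i) < 2)%N]].

Definition polytab (t : 'I_d * 'I_d * 'I_d * 'I_d) (X : {set 'I_d}) : F :=
  let: (a, b, c, e) := t in
  (X == [set c; e])%:R - (X == [set a; e])%:R - (X == [set c; b])%:R
  + (X == [set a; b])%:R.

Definition distinct4 (t : 'I_d * 'I_d * 'I_d * 'I_d) : bool :=
  let: (a, b, c, e) := t in uniq [:: a; b; c; e].

Definition specht (f : {ffun {set 'I_d} -> F}) : Prop :=
  exists coef : 'I_d * 'I_d * 'I_d * 'I_d -> F,
    f = [ffun X => \sum_(t | distinct4 t) coef t * polytab t X].

Definition specht_embedding (phi : {ffun {set 'I_d} -> F} -> L) : Prop :=
  [/\ forall (c : F) f h, specht f -> specht h ->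
        phi [ffun X : {set 'I_d} => c * f X + h X] = c *: phi f + phi h,
      forall f, specht f -> phi f = 0 -> f = [ffun _ => 0]
    & forall g f, g \in GalLF -> specht f ->
        phi [ffun X : {set 'I_d} => f [set i | idx_perm g i \in X]] = g (phi f)].

Definition isotypic (x : L) : Prop :=
  exists (n : nat) (phi : 'I_n -> {ffun {set 'I_d} -> F} -> L)
         (v : 'I_n -> {ffun {set 'I_d} -> F}),
    [/\ forall i, specht_embedding (phi i), forall i, specht (v i)
      & x = \sum_(i < n) phi i (v i)].

Definition V2 (x : L) : Prop := isotypic x /\ x \in fixedField H12.

Definition conjn (m : nat) (x : L) : L := oapp (fun i : 'I_d => s i x) 0 (insub m).
Definition permn (tau : 'S_d) (k : nat) : nat := oapp (fun i : 'I_d => val (tau i)) k (insub k).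

Definition qmap (x : L) : L :=
  \sum_(tau : 'S_d | [forall i : 'I_d, (val i < 2)%N ==> (tau i == i)])
     (conjn 0 x - conjn (permn tau 2) x) * (conjn 1 x - conjn (permn tau 3) x).
End Defs.

(* Main.v *)
Require Import Defs.
From HB Require Import structures.
From mathcomp Require Import all_boot all_order all_algebra all_fingroup all_field.
From mathcomp Require Import mpoly.
From mathcomp Require Import ring.
Import GRing.Theory.
Local Open Scope ring_scope.

Set Implicit Arguments. Unset Strict Implicit. Unset Printing Implicit Defensive.

Definition bform (R : comNzRingType) n (X : 'I_n -> 'I_n -> R) (u v : 'I_n -> R) : R :=
  \sum_j \sum_k u j * v k * X j k.

Lemma bform_ext (R : comNzRingType) n (X : 'I_n -> 'I_n -> R) u1 u2 v1 v2 :
  u1 =1 u2 -> v1 =1 v2 -> bform X u1 v1 = bform X u2 v2.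
Proof.
move=> eu ev; apply: eq_bigr => j _; apply: eq_bigr => k _; by rewrite eu ev.
Qed.

Lemma bformDl (R : comNzRingType) n (X : 'I_n -> 'I_n -> R) u1 u2 v :
  bform X (fun i => u1 i + u2 i) v = bform X u1 v + bform X u2 v.
Proof.
rewrite /bform -big_split; apply: eq_bigr => j _; rewrite -big_split.
by apply: eq_bigr => k _; rewrite !mulrDl.
Qed.

Lemma bformDr (R : comNzRingType) n (X : 'I_n -> 'I_n -> R) u v1 v2 :
  bform X u (fun i => v1 i + v2 i) = bform X u v1 + bform X u v2.
Proof.
rewrite /bform -big_split; apply: eq_bigr => j _; rewrite -big_split.
by apply: eq_bigr => k _; rewrite mulrDr mulrDl.
Qed.

Lemma sum_delta (R : comNzRingType) n (j : 'I_n) (f : 'I_n -> R) :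
  \sum_b (b == j)%:R * f b = f j.
Proof.
rewrite (bigD1 j) //= eqxx mul1r big1 ?addr0 // => b /negbTE ->; by rewrite mul0r.
Qed.

Lemma bform_e (R : comNzRingType) n (X : 'I_n -> 'I_n -> R) j k :
  bform X (fun i => (i == j)%:R) (fun i => (i == k)%:R) = X j k.
Proof.
rewrite /bform (eq_bigr (fun a => (a == j)%:R * \sum_b (b == k)%:R * X a b)); last first.
  by move=> a _; rewrite mulr_sumr; apply: eq_bigr => b _; rewrite mulrA.
rewrite sum_delta; exact: sum_delta.
Qed.

Lemma bform_sym (R : comNzRingType) n (X : 'I_n -> 'I_n -> R) y :
  bform (fun j k => X j k + X k j) y y = 2%:R * bform X y y.
Proof.
rewrite /bform (eq_bigr (fun j => \sum_k y j * y k * X j k + \sum_k y j * y k * X k j)); last first.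
  by move=> j _; rewrite -big_split; apply: eq_bigr => k _; rewrite mulrDr.
rewrite big_split /= [X in _ + X]exchange_big /=.
rewrite mulr_natl mulr2n; congr (_ + _); apply: eq_bigr => j _; apply: eq_bigr => k _.
by rewrite [y j * _]mulrC.
Qed.

Lemma quad_unique (R : idomainType) n (X1 X2 : 'I_n -> 'I_n -> R) :
  2%:R != 0 :> R ->
  (forall j k, bform X1 (fun i => (i == j)%:R + (i == k)%:R) (fun i => (i == j)%:R + (i == k)%:R)
             = bform X2 (fun i => (i == j)%:R + (i == k)%:R) (fun i => (i == j)%:R + (i == k)%:R)) ->
  (forall j, bform X1 (fun i => (i == j)%:R) (fun i => (i == j)%:R)
           = bform X2 (fun i => (i == j)%:R) (fun i => (i == j)%:R)) ->
  forall y, bform X1 y y = bform X2 y y.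
Proof.
move=> h2 hjk hj y.
have key : forall X : 'I_n -> 'I_n -> R, forall j k,
   X j k + X k j = bform X (fun i => (i == j)%:R + (i == k)%:R) (fun i => (i == j)%:R + (i == k)%:R)
     - bform X (fun i => (i == j)%:R) (fun i => (i == j)%:R)
     - bform X (fun i => (i == k)%:R) (fun i => (i == k)%:R).
  move=> X j k; rewrite bformDl !bformDr !bform_e.
  ring.
apply: (mulfI h2); rewrite -!bform_sym.
rewrite /bform; apply: eq_bigr => j _; apply: eq_bigr => k _.
by rewrite (key X1) (key X2) hjk !hj.
Qed.

Lemma evalform (F : fieldType) (R : comNzRingType) n (f : {rmorphism F -> R})
  (p : {mpoly F[n]}) y :
  (map_mpoly f p).@[y] = \sum_(m <- msupp p) f p@_m * \prod_i y i ^+ m i.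
Proof.
rewrite {1}(mpolyE p) (raddf_sum (map_mpoly f)) (raddf_sum (meval y)).
apply: eq_bigr => m _.
transitivity ((f p@_m *: 'X_[m]).@[y]).
  by congr meval; rewrite -(map_mpolyX f m); exact: map_mpolyZ.
by rewrite mevalZ mevalX.
Qed.

Lemma deg2 n (m : 'X_{1..n}) : mdeg m = 2%N ->
  exists jk : 'I_n * 'I_n, m == (U_(jk.1) + U_(jk.2))%MM.
Proof.
move=> hm.
have [i hi] : exists i, (0 < m i)%N.
  apply/existsP; apply: contraT; rewrite negb_exists => /forallP h0.
  have : m == 0%MM.
    apply/eqP/mnmP => i; move: (h0 i); rewrite lt0n negbK mnm0E => /eqP //.
  by rewrite -mdeg_eq0 hm.
have em : m = (U_(i) + (m - U_(i)))%MM.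
  apply/mnmP => j; rewrite mnmDE mnmBE mnm1E.
  by case: eqP => [<-|_]; rewrite ?subn0 // subnKC.
have : mdeg (m - U_(i))%MM == 1%N.
  by move: hm; rewrite {1}em mdegD mdeg1 add1n => [[->]].
case/mdeg1P => k /eqP hk; exists (i, k); by rewrite /= {1}em hk.
Qed.

Lemma mono2 (R : comNzRingType) n (j k : 'I_n) (y : 'I_n -> R) :
  \prod_i y i ^+ (U_(j) + U_(k))%MM i = y j * y k.
Proof.
have := @commr_mmap1_M n R y U_(j) U_(k) (fun i x => mulrC x (y i)).
by rewrite !mmap1U /mmap1.
Qed.

Definition pkm n (m : 'X_{1..n}) := [pick jk : 'I_n * 'I_n | m == (U_(jk.1) + U_(jk.2))%MM].
Definition Xof (F : fieldType) n (p : {mpoly F[n]}) (j k : 'I_n) : F :=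
  \sum_(m <- msupp p) p@_m * (pkm m == Some (j, k))%:R.

Lemma homog2 (F : fieldType) n (p : {mpoly F[n]}) : p \is 2.-homog ->
  forall (R : comNzRingType) (f : {rmorphism F -> R}) y,
    \sum_(m <- msupp p) f p@_m * \prod_i y i ^+ m i = bform (fun j k => f (Xof p j k)) y y.
Proof.
move=> /dhomogP hp.
set pk := @pkm n.
move=> R f y; rewrite /bform /Xof.

rewrite (eq_bigr (fun j => \sum_(m <- msupp p) \sum_k y j * y k * f (p@_m * (pk m == Some (j, k))%:R))); last first.
  move=> j _; rewrite exchange_big /=; apply: eq_bigr => k _.
  by rewrite rmorph_sum mulr_sumr.
rewrite exchange_big /=; apply: eq_big_seq => m /hp /deg2 hm.

rewrite /pk /pkm; case: pickP => [[a b] /= /eqP -> | hn]; last first.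
  by exfalso; case: hm => jk; rewrite hn.
rewrite mono2.
rewrite (bigD1 a) //= (bigD1 b) //= eqxx rmorphM rmorph1 mulr1.
rewrite big1 ?addr0; last first.
  move=> k /negbTE hk.
  have -> : (Some (a, b) == Some (a, k)) = false.
    by apply/eqP => [[hb]]; rewrite hb eqxx in hk.
  by rewrite mulr0 rmorph0 mulr0.
rewrite big1 ?addr0; last first.
  move=> j /negbTE hj; apply: big1 => k _.
  have -> : (Some (a, b) == Some (j, k)) = false.
    by apply/eqP => [[ha hb]]; rewrite ha eqxx in hj.
  by rewrite mulr0 rmorph0 mulr0.
by rewrite mulrC.
Qed.

Lemma expand_prod (R : comNzRingType) n (I : finType) (P : pred I) (D E : I -> 'I_n -> R) (u : 'I_n -> R) :
  \sum_(t | P t) (\sum_j u j * D t j) * (\sum_k u k * E t k)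
  = bform (fun j k => \sum_(t | P t) D t j * E t k) u u.
Proof.
rewrite /bform.
rewrite (eq_bigr (fun t => \sum_j \sum_k u j * u k * (D t j * E t k))); last first.
  move=> t _; rewrite mulr_suml; apply: eq_bigr => j _; rewrite mulr_sumr.
  apply: eq_bigr => k _; ring.
rewrite exchange_big /=; apply: eq_bigr => j _.
rewrite exchange_big /=; apply: eq_bigr => k _.
by rewrite mulr_sumr.
Qed.

Unset Implicit Arguments.

Lemma natF_neq0 (F : fieldType) d k : (forall p, p \in [pchar F] -> (d < p)%N) ->
  (0 < k <= d)%N -> k%:R != 0 :> F.
Proof.
move=> hch /andP [k0 kd]; apply/negP => h0.
have [p hp] := natf0_pchar k0 h0.
have := hch p hp; have : (p %| k)%N by rewrite (dvdn_pcharf hp).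
move/(dvdn_leq k0) => hpk; move: (leq_trans hpk kd); rewrite leqNgt => /negbTE ->.
by [].
Qed.

Lemma conjnE (F : fieldType) (L : splittingFieldType F) d (s : 'I_d -> gal_of (fullv : {vspace L})) (i : 'I_d) k x :
  k = val i -> conjn s k x = s i x.
Proof. by move=> ->; rewrite /conjn valK. Qed.

Lemma permnE d (t : 'S_d) (i : 'I_d) k : k = val i -> permn t k = val (t i).
Proof. by move=> ->; rewrite /permn valK. Qed.

Lemma perm_neq d (t : 'S_d) (a b : 'I_d) : t b = b -> val a != val b -> (t a == b) = false.
Proof. move=> hb hab; apply/negbTE; rewrite -hb (inj_eq perm_inj); by rewrite -val_eqE. Qed.

Theorem mainTheorem17 (F : fieldType) (L : splittingFieldType F) (d : nat)
  (K : {subfield L}) (s : 'I_d -> gal_of (fullv : {vspace L}))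
  (alpha astar : 'I_d.-1 -> L)
  (omega : 'I_((d * (d - 3))./2) -> L)
  (Q : 'I_((d * (d - 3))./2) -> {mpoly F[d.-1]}) :
  (4 <= d)%N ->
  (forall p, p \in [pchar F] -> (d < p)%N) ->
  \dim K = d ->
  galois 1%VS (fullv : {vspace L}) ->
  (forall E : {subfield L}, (K <= E)%VS -> normalField 1%VS E ->
      (E : {vspace L}) = fullv) ->
  (GalLF L \isog [set: 'S_d])%g ->
  (forall m, s m \in GalLF L) ->
  (forall m : 'I_d, val m = 0%N -> {in K, forall x, s m x = x}) ->
  (forall m m' : 'I_d, m != m' -> exists2 x, x \in K & s m x != s m' x) ->
  basis_of K (1 :: [seq alpha i | i <- enum 'I_d.-1]) ->
  (forall i, trKF s (alpha i) = 0) ->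
  (forall j, astar j \in K) ->
  (forall j, trKF s (astar j) = 0) ->
  (forall i j, trKF s (alpha i * astar j) = (i == j)%:R) ->
  (forall l, V2 K s (omega l)) ->
  free [seq omega l | l <- enum 'I_((d * (d - 3))./2)] ->
  (forall x, V2 K s x -> x \in <<[seq omega l | l <- enum 'I_((d * (d - 3))./2)]>>%VS) ->
  (forall l, Q l \is 2.-homog) ->
  (forall a : 'I_d.-1 -> F,
     qmap s (\sum_j a j *: alpha j) = \sum_l (Q l).@[a] *: omega l) ->
  forall l,
    (map_mpoly (in_alg L) (Q l)).@[astar] = 0 /\
    (forall m : 'I_d, (map_mpoly (in_alg L) (Q l)).@[fun j => s m (astar j)] = 0).
Proof.
move: omega Q.
move: ((d * (d - 3))./2)%N => bb omega Q.
case: d s alpha astar omega Q => [|n] s alpha astar omega Q hd4 //.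
move=> hch _ _ _ _ _ _ _ hbasis htrA hastarK htrS hdual _ hfree _ hhom hqmap.
simpl in alpha, astar, Q.
have hdF : (n.+1)%:R != 0 :> F by apply: (@natF_neq0 F n.+1 _ hch); rewrite ltn0Sn leqnn.
have h2F : 2%:R != 0 :> F by apply: (@natF_neq0 F n.+1 _ hch); rewrite /= (leq_trans _ hd4).
have hdL : (n.+1)%:R != 0 :> L by rewrite -(rmorph_nat (in_alg L)) fmorph_eq0.
have h2L : 2%:R != 0 :> L by rewrite -(rmorph_nat (in_alg L)) fmorph_eq0.
pose N : 'M[L]_n.+1 := \matrix_(m, j) oapp (fun i => s m (alpha i)) 1 (unlift ord0 j).
pose Ns : 'M[L]_n.+1 := \matrix_(m, j) oapp (fun i => s m (astar i)) ((n.+1)%:R^-1) (unlift ord0 j).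
have hNN : N^T *m Ns = 1%:M.
  apply/matrixP => i j; rewrite !mxE.
  under eq_bigr do rewrite !mxE.
  case: (unliftP ord0 i) => [i'|] ->; case: (unliftP ord0 j) => [j'|] ->;
    rewrite ?liftK ?unlift_none /=.
  - rewrite (inj_eq lift_inj) -hdual /trKF; apply: eq_bigr => m _; by rewrite rmorphM.
  - rewrite -mulr_suml; have := htrA i'; rewrite /trKF => ->.
    by rewrite mul0r.
  - under eq_bigr do rewrite mul1r.
    by have := htrS j'; rewrite /trKF => ->.
  - under eq_bigr do rewrite mul1r.
    rewrite sumr_const card_ord.
    have -> : (n.+1)%:R^-1 *+ n.+1 = (n.+1)%:R^-1 * (n.+1)%:R :> L by rewrite mulr_natr.
    by rewrite mulVf.
have hNN2 := mulmx1C hNN.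
have K1 : forall m m' : 'I_n.+1,
    \sum_i s m (astar i) * s m' (alpha i) = (m == m')%:R - (n.+1)%:R^-1.
  move=> m m'; have := congr1 (fun M : 'M[L]_n.+1 => M m m') hNN2; rewrite !mxE big_ord_recl /=.
  rewrite !mxE unlift_none /= => <-; rewrite mulr1 [_^-1 + _]addrC addrK.
  by apply: eq_bigr => i _; rewrite !mxE liftK.
pose i1 : 'I_n.+1 := inord 1.
pose i2 : 'I_n.+1 := inord 2.
pose i3 : 'I_n.+1 := inord 3.
have v1 : val i1 = 1%N by apply: inordK; rewrite (leq_trans _ hd4).
have v2 : val i2 = 2%N by apply: inordK; rewrite (leq_trans _ hd4).
have v3 : val i3 = 3%N by apply: inordK; rewrite (leq_trans _ hd4).
pose Tset (t : 'S_n.+1) := [forall i : 'I_n.+1, (val i < 2)%N ==> (t i == i)].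
pose G j k := \sum_(t | Tset t) (s ord0 (alpha j) - s (t i2) (alpha j)) * (s i1 (alpha k) - s (t i3) (alpha k)).
have hq : forall x, qmap s x = \sum_(t | Tset t) (s ord0 x - s (t i2) x) * (s i1 x - s (t i3) x).
  move=> x; rewrite /qmap; apply: eq_bigr => t _.
  rewrite (@conjnE _ _ _ s ord0) // (@permnE _ t i2) ?v2 // (@conjnE _ _ _ s (t i2)) //.
  by rewrite (@conjnE _ _ _ s i1) ?v1 // (@permnE _ t i3) ?v3 // (@conjnE _ _ _ s (t i3)).
have hqA : forall a : 'I_n -> F,
    qmap s (\sum_j a j *: alpha j) = bform G (fun j => (a j)%:A) (fun j => (a j)%:A).
  move=> a; rewrite hq /G -expand_prod; apply: eq_bigr => t _.
  rewrite !linear_sum /=; congr (_ * _); rewrite -big_split; apply: eq_bigr => j _ /=;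
    by rewrite !linearZ /= mulr_algl scalerBr scalerN.
have hqB : forall m : 'I_n.+1, bform G (fun j => s m (astar j)) (fun j => s m (astar j)) = 0.
  move=> m; rewrite /G -expand_prod; apply: big1 => t /forallP ht.
  have ht0 : t ord0 = ord0 by apply/eqP; exact: (implyP (ht ord0)).
  have ht1 : t i1 = i1 by apply/eqP; apply: (implyP (ht i1)); rewrite v1.
  under eq_bigr do rewrite mulrBr.
  under [X in _ * X]eq_bigr do rewrite mulrBr.
  rewrite !sumrB !K1.
  have e : forall a b c : L, a - c - (b - c) = a - b by move=> *; ring.
  rewrite !e.
  have hA : (t i3 == ord0) = false by apply: perm_neq; rewrite ?v3.
  have hB : (t i3 == t i2) = false by rewrite (inj_eq perm_inj) -val_eqE v2 v3.
  have hC : (i1 == ord0) = false by rewrite -val_eqE v1.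
  have hD : (i1 == t i2) = false by rewrite eq_sym; apply: perm_neq; rewrite ?v1 ?v2.
  case: (eqVneq m i1) => [->|n1]; first by rewrite hC hD subrr mul0r.
  case: (eqVneq m (t i3)) => [->|n2]; first by rewrite hA hB subrr mul0r.
  by rewrite subrr mulr0.
pose H j k := \sum_l (Xof (Q l) j k)%:A * omega l.
have hH : forall y, \sum_l (map_mpoly (in_alg L) (Q l)).@[y] * omega l = bform H y y.
  move=> y; rewrite /bform.
  under eq_bigr do rewrite evalform (homog2 (hhom _)) /bform mulr_suml.
  rewrite exchange_big; apply: eq_bigr => j _.
  under eq_bigr do rewrite mulr_suml.
  rewrite exchange_big; apply: eq_bigr => k _.
  by rewrite mulr_sumr; apply: eq_bigr => l _; rewrite mulrA.
have hHF : forall a : 'I_n -> F,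
    \sum_l (Q l).@[a] *: omega l = bform H (fun j => (a j)%:A) (fun j => (a j)%:A).
  move=> a; rewrite -hH; apply: eq_bigr => l _; rewrite evalform -mulr_algl; congr (_ * _).
  rewrite mevalE -in_algE (rmorph_sum (in_alg L)); apply: eq_bigr => m _.
  rewrite (rmorphM (in_alg L)) (rmorph_prod (in_alg L)); congr (_ * _).
  by apply: eq_bigr => i _; rewrite (rmorphXn (in_alg L)).
have hHG : forall y, bform H y y = bform G y y.
  apply: (@quad_unique L n H G h2L).
  - move=> j k; pose a := fun i : 'I_n => ((i == j)%:R + (i == k)%:R : F).
    have ea : forall i, (a i)%:A = (i == j)%:R + (i == k)%:R :> L.
      by move=> i; rewrite /a scalerDl !scaler_nat.
    have := hqA a; rewrite hqmap hHF => e.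
    by rewrite -!(bform_ext _ ea ea).
  - move=> j; pose a := fun i : 'I_n => ((i == j)%:R : F).
    have ea : forall i, (a i)%:A = (i == j)%:R :> L.
      by move=> i; rewrite /a !scaler_nat.
    have := hqA a; rewrite hqmap hHF => e.
    by rewrite -!(bform_ext _ ea ea).
have hD : forall m, \sum_l (map_mpoly (in_alg L) (Q l)).@[fun j => s m (astar j)] * omega l = 0.
  by move=> m; rewrite hH hHG hqB.
pose c l := (map_mpoly (in_alg L) (Q l)).@[astar].
have hsc : forall m l, s m (c l) = (map_mpoly (in_alg L) (Q l)).@[fun j => s m (astar j)].
  move=> m l; rewrite /c !evalform rmorph_sum; apply: eq_bigr => mm _.
  rewrite rmorphM rmorph_prod; congr (_ * _).
    by rewrite /= linearZ /= rmorph1.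
  by apply: eq_bigr => i _; rewrite rmorphXn.
have hcK : forall l, c l \in K.
  move=> l; rewrite /c evalform rpred_sum // => mm _.
  rewrite rpredM ?rpred_prod //; first by rewrite /= rpredZ // mem1v.
  by move=> i _; rewrite rpredX.
pose bt : n.+1.-tuple L := cons_tuple 1 (map_tuple alpha (ord_tuple n)).
have hbt : (<<bt>> = K)%VS.
  move: hbasis => /andP [/eqP <- _]; by rewrite -val_ord_tuple.
have hbtN : forall m (j : 'I_n.+1), s m bt`_j = N m j.
  move=> m j; rewrite mxE -tnth_nth; case: (unliftP ord0 j) => [j'|] ->.
    by rewrite /= tnthS tnth_map tnth_ord_tuple.
  by rewrite /= rmorph1.
have hsc2 : forall m l, s m (c l) = \sum_i (coord bt i (c l))%:A * N m i.
  move=> m l; have hcl : c l \in <<bt>>%VS by rewrite hbt hcK.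
  rewrite {1}(coord_span hcl) linear_sum; apply: eq_bigr => i _.
  by rewrite linearZ /= hbtN mulr_algl.
have hE : forall j', \sum_l (coord bt j' (c l))%:A * omega l = 0.
  move=> j'.
  have <- : \sum_m Ns m j' * \sum_l s m (c l) * omega l = \sum_l (coord bt j' (c l))%:A * omega l.
    under eq_bigr do rewrite mulr_sumr.
    rewrite exchange_big; apply: eq_bigr => l _.
    have -> : \sum_m Ns m j' * (s m (c l) * omega l) = (\sum_m Ns m j' * s m (c l)) * omega l.
      by rewrite mulr_suml; apply: eq_bigr => m _; rewrite mulrA.
    congr (_ * _).
    under eq_bigr do rewrite hsc2 mulr_sumr.
    rewrite exchange_big /=.
    transitivity (\sum_i (coord bt i (c l))%:A * (N^T *m Ns) i j').
      apply: eq_bigr => i _; rewrite !mxE mulr_sumr; apply: eq_bigr => m _.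
      rewrite !mxE; ring.
    rewrite hNN; under eq_bigr do rewrite mxE.
    rewrite (bigD1 j') //= eqxx mulr1 big1 ?addr0 // => i /negbTE ->.
    by rewrite mulr0.
  by apply: big1 => m _; rewrite (eq_bigr _ (fun l _ => congr1 (fun x => x * omega l) (hsc m l))) hD mulr0.
have hco : forall l j', coord bt j' (c l) = 0.
  move=> l j'.
  pose wt := map_tuple omega (ord_tuple bb).
  have hfr : free wt by move: hfree; rewrite -val_ord_tuple.
  move/freeP: hfr => hfr; apply: (hfr (fun l => coord bt j' (c l))).
  rewrite -[in RHS](hE j'); apply: eq_bigr => i _.
  by rewrite -tnth_nth tnth_map tnth_ord_tuple mulr_algl.
move=> l.
have hc0 : c l = 0.
  have hcl : c l \in <<bt>>%VS by rewrite hbt hcK.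
  by rewrite (coord_span hcl) big1 // => i _; rewrite hco scale0r.
split; first exact: hc0.
by move=> m; rewrite -hsc hc0 rmorph0.
Qed.
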